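(* Let $\phi:\mathscr{M}[\underline x]\to\mathbb{R}$ be a homomorphism of $\mathbb{R}$-algebras. The following are equivalent: (i) $\phi(\mathtt{m}(f^2))\ge0$ for all $f\in\mathscr{M}[\underline x]$; (ii) $\phi(\mathtt{m}(p^2))\ge0$ for all $p\in\mathbb{R}[\underline x]$; (iii) the real matrix $(\phi(\mathtt{m}(uv)))_{u,v\in[\underline x]_d}$ is positive semidefinite for all $d\in\mathbb{N}$.
   Context: Let $\mathbb{R}[\underline x]=\mathbb{R}[x_1,\dots,x_n]$, $\mathscr{M}=\mathbb{R}[\mathtt{m}_{i_1,\dots,i_n}\colon (i_1,\dots,i_n)\in\mathbb{N}_0^n]$ the polynomial ring in countably many indeterminates with $\mathtt{m}_{0,\dots,0}:=1$, $\mathscr{M}[\underline x]=\mathscr{M}\otimes_{\mathbb{R}}\mathbb{R}[\underline x]$, and $\mathtt{m}:\mathscr{M}[\underline x]\to\mathscr{M}$ the unique $\mathscr{M}$-linear map with $\mathtt{m}(x_1^{i_1}\cdots x_n^{i_n})=\mathtt{m}_{i_1,\dots,i_n}$. $[\underline x]_d$ denotes the set of monomials in $x_1,\dots,x_n$ of degree at most $d$. *)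

(* Defs.v *)
From HB Require Import structures.
From mathcomp Require Import all_boot all_order all_algebra.
From mathcomp Require Import reals.
From mathcomp.multinomials Require mpoly monalg.

Set Implicit Arguments.
Unset Strict Implicit.
Unset Printing Implicit Defensive.

Import Order.TTheory GRing.Theory Num.Theory.
Local Open Scope ring_scope.

Module MomIdxDef.
Import mpoly.
(* Index set of the moment indeterminates m_alpha, alpha in N_0^n, alpha <> 0
   (m_0 is not an indeterminate: m_0 := 1). *)
Definition MomIdx (n : nat) : choiceType := {a : 'X_{1..n} | a != 0%MM}.
End MomIdxDef.
Export MomIdxDef.

Module MomAlg.
Import monalg.
(* scriptM = R[m_alpha : alpha in N_0^n, alpha <> 0]: the polynomial ring in
   countably many indeterminates, i.e. the commutative monoid algebra over R of
   the free commutative monoid on MomIdx n. *)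
Definition Mring (R : comNzRingType) (n : nat) : Type :=
  malg (cmonom (MomIdx n)) R.

Section Inst.
Variables (R : comNzRingType) (n : nat).
HB.instance Definition _ := GRing.ComAlgebra.on (Mring R n).
End Inst.

Definition mgen (R : comNzRingType) (n : nat) (b : MomIdx n) : Mring R n :=
  mkmalgU (ucm b) (1 : R).
End MomAlg.
Export MomAlg.

From mathcomp.multinomials Require Import mpoly.

Definition mvar (R : comNzRingType) (n : nat) (a : 'X_{1..n}) : Mring R n :=
  oapp (@mgen R n) 1 (insub a : option (MomIdx n)).

(* scriptM[x] = scriptM (x)_R R[x] = scriptM[x_1, ..., x_n] *)
Definition MX (R : comNzRingType) (n : nat) := {mpoly (Mring R n)[n]}.

Definition mom (R : comNzRingType) (n : nat) (f : MX R n) : Mring R n :=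
  \sum_(mu <- msupp f) f@_mu * mvar R mu.

Definition incM (R : comNzRingType) (n : nat) (c : Mring R n) : MX R n := c%:MP.

Definition incR (R : comNzRingType) (n : nat) (r : R) : Mring R n := r%:A.

Definition incRX (R : comNzRingType) (n : nat) (p : {mpoly R[n]}) : MX R n :=
  map_mpoly (@incR R n) p.

Definition psd (R : realFieldType) (T : finType) (A : T -> T -> R) : Prop :=
  (forall u v, A u v = A v u) /\
  (forall c : T -> R, 0 <= \sum_(u : T) \sum_(v : T) c u * A u v * c v).

(* Main.v *)
Require Import Defs.
From HB Require Import structures.
From mathcomp Require Import all_boot all_order all_algebra.
From mathcomp Require Import reals.
From mathcomp.multinomials Require Import mpoly.

Import Order.TTheory GRing.Theory Num.Theory.
Local Open Scope ring_scope.

Lemma big_superset {T : eqType} {V : nmodType} {r s : seq T} {G : T -> V} :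
  uniq r -> uniq s -> {subset r <= s} ->
  (forall x, x \in s -> x \notin r -> G x = 0) ->
  \sum_(x <- s) G x = \sum_(x <- r) G x.
Proof.
move=> ur us rs G0.
rewrite (bigID (mem r)) /= [X in _ + X]big1_seq ?addr0; last first.
  by move=> x /andP[xr xs]; apply: G0.
rewrite -big_filter; apply: perm_big; apply: uniq_perm => //.
  exact: filter_uniq.
by move=> x; rewrite mem_filter; apply/andP/idP => [[]//|xr]; split => //; apply: rs.
Qed.

Section Mom.
Variables (R : comNzRingType) (n : nat).
Implicit Types f g : MX R n.

Lemma mom_sup {f} {s} : uniq s -> {subset msupp f <= s} ->
  mom f = \sum_(m <- s) f@_m * mvar R m.
Proof.
move=> us sub; rewrite /mom (big_superset (msupp_uniq f) us sub) //.
by move=> x _; rewrite mcoeff_msupp negbK => /eqP ->; rewrite mul0r.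
Qed.

Lemma momD f g : mom (f + g) = mom f + mom g.
Proof.
set s := undup (msupp f ++ msupp g).
have us : uniq s by exact: undup_uniq.
have sf : {subset msupp f <= s} by move=> x xf; rewrite mem_undup mem_cat xf.
have sg : {subset msupp g <= s} by move=> x xf; rewrite mem_undup mem_cat xf orbT.
have sfg : {subset msupp (f + g) <= s}.
  move=> x; rewrite mcoeff_msupp mcoeffD => H; rewrite mem_undup mem_cat !mcoeff_msupp.
  by apply: contraR H; rewrite negb_or !negbK => /andP[/eqP-> /eqP->]; rewrite addr0.
rewrite (mom_sup us sf) (mom_sup us sg) (mom_sup us sfg) -big_split /=.
by apply: eq_bigr => m _; rewrite mcoeffD mulrDl.
Qed.

Lemma mom0 : mom (0 : MX R n) = 0.
Proof. by rewrite /mom msupp0 big_nil. Qed.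

Lemma mom_sum (I : Type) (r : seq I) (F : I -> MX R n) :
  mom (\sum_(i <- r) F i) = \sum_(i <- r) mom (F i).
Proof. exact: (big_morph _ momD mom0). Qed.

Lemma momZ c f : mom (c *: f) = c * mom f.
Proof.
have sub : {subset msupp (c *: f) <= msupp f}.
  move=> x; rewrite !mcoeff_msupp mcoeffZ; apply: contra_neq => ->; by rewrite mulr0.
rewrite (mom_sup (msupp_uniq f) sub) /mom big_distrr /=.
by apply: eq_bigr => m _; rewrite mcoeffZ mulrA.
Qed.

Lemma momX m : mom ('X_[m] : MX R n) = mvar R m.
Proof. by rewrite /mom msuppX big_seq1 mcoeffX eqxx mul1r. Qed.

End Mom.

Lemma mul0_r3 (R : ringType) (x y z : R) : z = 0 -> x * y * z = 0.
Proof. by move=> ->; rewrite mulr0. Qed.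
Lemma mul0_l3 (R : ringType) (x y z : R) : x = 0 -> x * y * z = 0.
Proof. by move=> ->; rewrite !mul0r. Qed.

Theorem lemma3p1 (R : realType) (n : nat) (phi : {rmorphism MX R n -> R})
  (phiR : forall r : R, phi (incM (incR n r)) = r) :
  [<-> forall f : MX R n, 0 <= phi (incM (mom (f ^+ 2)));
       forall p : {mpoly R[n]}, 0 <= phi (incM (mom ((incRX p) ^+ 2)));
       forall d : nat,
         psd (fun u v : 'X_{1..n < d.+1} =>
                phi (incM (mom ('X_[bmnm u] * 'X_[bmnm v] : MX R n))))].
Proof.
pose Psi := fun g : MX R n => phi (incM (mom g)).
have Psi_sum : forall (I : Type) (r : seq I) (F : I -> MX R n),
    Psi (\sum_(i <- r) F i) = \sum_(i <- r) Psi (F i).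
  by move=> I r F; rewrite /Psi mom_sum /incM rmorph_sum rmorph_sum.
have PsiZ : forall c g, Psi (c *: g) = phi (incM c) * Psi g.
  by move=> c g; rewrite /Psi momZ /incM !rmorphM.
have phiR' : forall r : R, phi (incM (in_alg (Mring R n) r)) = r := phiR.
have SQ : forall (I : Type) (r : seq I) (a : I -> Mring R n) (X : I -> MX R n),
   phi (incM (mom ((\sum_(i <- r) a i *: X i) ^+ 2))) =
   \sum_(i <- r) \sum_(j <- r) phi (incM (a i)) * Psi (X i * X j) * phi (incM (a j)).
  move=> I r a X; rewrite -[LHS]/(Psi ((\sum_(i <- r) a i *: X i) ^+ 2)); rewrite expr2 mulr_suml Psi_sum; apply: eq_bigr => i _.
  rewrite mulr_sumr Psi_sum; apply: eq_bigr => j _.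
  by rewrite -scalerAl -scalerAr !PsiZ mulrA mulrAC.
tfae.
- by move=> H p; apply: H.
- move=> H d; split.
    by move=> u v; rewrite mulrC.
  move=> c; have := H (\sum_(u : 'X_{1..n < d.+1}) c u *: 'X_[bmnm u]).
  have E : incRX (\sum_(u : 'X_{1..n < d.+1}) c u *: 'X_[bmnm u]) =
     \sum_(u : 'X_{1..n < d.+1}) (incR n (c u) : Mring R n) *: ('X_[bmnm u] : MX R n).
    rewrite (_ : forall p, incRX p = map_mpoly (in_alg (Mring R n)) p) // rmorph_sum /=.
    by apply: eq_bigr => u _; rewrite map_mpolyZ map_mpolyX.
  move=> Hp; rewrite E in Hp.
  have Q := SQ _ (index_enum _) (fun u => incR n (c u)) (fun u => 'X_[bmnm u] : MX R n).
  apply: (le_trans Hp); rewrite le_eqVlt; apply/orP; left; apply/eqP.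
  apply: (etrans Q).
  apply: eq_bigr => u _; apply: eq_bigr => v _.
  have e1 := phiR (c u); have e2 := phiR (c v).
  by apply: (etrans (f_equal2 (fun x y => x * Psi ('X_[bmnm u] * 'X_[bmnm v] : MX R n) * y) e1 e2)).
- move=> H f.
  have := (H (msize f)).2 (fun u => phi (incM f@_(bmnm u))).
  have reidx : forall G : 'X_{1..n} -> R, (forall m, m \notin msupp f -> G m = 0) ->
      \sum_(u : 'X_{1..n < (msize f).+1}) G (bmnm u) = \sum_(m <- msupp f) G m.
    move=> G G0; rewrite -(big_map (@bmnm n (msize f).+1) xpredT G).
    apply: big_superset.
    - exact: msupp_uniq.
    - rewrite map_inj_uniq ?index_enum_uniq //; exact: val_inj.
    - move=> m mf; have Hm : (mdeg m < (msize f).+1)%N by apply: leqW; apply: msize_mdeg_lt.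
      apply/mapP; exists (BMultinom Hm) => //; exact: mem_index_enum.
    - by move=> m _ /G0.
  have c0 : forall m, m \notin msupp f -> phi (incM f@_m) = 0.
    move=> m; rewrite -mcoeff_eq0 => /eqP ->.
    by rewrite /incM mpolyC0; apply: rmorph0.
  have I1 : forall m', forall m, m \notin msupp f ->
     phi (incM f@_m') * phi (incM (mom ('X_[m'] * 'X_[m] : MX R n))) * phi (incM f@_m) = 0.
    by move=> m' m /c0; apply: mul0_r3.
  have I2 : forall m', m' \notin msupp f ->
     \sum_(m <- msupp f) phi (incM f@_m') * phi (incM (mom ('X_[m'] * 'X_[m] : MX R n))) * phi (incM f@_m) = 0.
    by move=> m /c0 H0; apply: big1 => i _; apply: mul0_l3.
  under eq_bigr => u _ do rewrite (reidx _ (I1 (bmnm u))).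
  rewrite (reidx _ I2) => Hp.
  have Q := SQ _ (msupp f) (fun m => f@_m) (fun m => 'X_[m] : MX R n).
  rewrite -mpolyE in Q.
  exact: (eq_rect _ (fun x => 0 <= x) Hp _ (esym Q)).
Qed.
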